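(* Let $G$ be a nilpotent group of class $c$ and of odd order, and let $n=\lceil c/2\rceil$. Then for every $x\in\gamma_n(G)$ and $g\in G$, the order of the element $x\otimes g\in G\otimes G$ divides $\exp(\gamma_n(G))$.
   Context: $\gamma_n(G)$ is the $n$-th term of the lower central series. Conventions: ${}^g h = ghg^{-1}$. The nonabelian tensor square $G\otimes G$ is generated by symbols $g\otimes h$ subject to $gg'\otimes h=({}^g g'\otimes {}^g h)(g\otimes h)$ and $g\otimes hh'=(g\otimes h)({}^h g\otimes {}^h h')$. *)

(* Defs.v *)
From mathcomp Require Import all_boot all_fingroup all_solvable.
Set Implicit Arguments. Unset Strict Implicit. Unset Printing Implicit Defensive.

(* An abstract (possibly infinite) group, used as a test target for the
   universal property defining the nonabelian tensor square. *)
Record absGroup := AbsGroup {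
  acar :> Type;
  amul : acar -> acar -> acar;
  aone : acar;
  ainv : acar -> acar;
  amulA : forall a b c, amul a (amul b c) = amul (amul a b) c;
  amul1g : forall a, amul aone a = a;
  amulVg : forall a, amul (ainv a) a = aone
}.

Fixpoint apow (H : absGroup) (a : H) (k : nat) : H :=
  match k with 0 => aone H | k'.+1 => amul a (apow a k') end.

(* Left conjugation  ^g h = g h g^-1 (paper's convention); in MathComp,
   h ^ y = y^-1 h y, so ^g h = h ^ g^-1. *)
Definition lconj (gT : finGroupType) (g h : gT) : gT := (h ^ g^-1)%g.

Definition tensor_pairing (gT : finGroupType) (G : {set gT}) (H : absGroup)
    (f : gT -> gT -> H) : Prop :=
  (forall g g' h, g \in G -> g' \in G -> h \in G ->
     f (g * g')%g h = amul (f (lconj g g') (lconj g h)) (f g h)) /\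
  (forall g h h', g \in G -> h \in G -> h' \in G ->
     f g (h * h')%g = amul (f g h) (f (lconj h g) (lconj h h'))).

(* G (x) G is the group presented by the symbols g (x) h and the relations
   above, so (g (x) h)^e = 1 there iff for every group H and every map
   f satisfying the relations, f g h ^ e = 1 (universal property of a
   presentation). *)
Definition tensor_order_dvd (gT : finGroupType) (G : {set gT}) (g h : gT)
    (e : nat) : Prop :=
  forall (H : absGroup) (f : gT -> gT -> H),
    tensor_pairing G f -> apow (f g h) e = aone H.

(* Main.v *)
Require Import Defs.
From mathcomp Require Import all_boot all_fingroup all_solvable.
From mathcomp Require Import zify.
Set Implicit Arguments. Unset Strict Implicit. Unset Printing Implicit Defensive.
Local Open Scope group_scope.
Lemma three_subgroupN (gT : finGroupType) (G N A B C : {group gT}) :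
  N <| G -> A \subset G -> B \subset G -> C \subset G ->
  [~: A, B, C] \subset N -> [~: B, C, A] \subset N -> [~: C, A, B] \subset N.
Proof.
move=> nN sA sB sC.
have nNG := normal_norm nN.
have nA : A \subset 'N(N) by apply: subset_trans nNG.
have nB : B \subset 'N(N) by apply: subset_trans nNG.
have nC : C \subset 'N(N) by apply: subset_trans nNG.
have nX : forall X Y : {group gT}, X \subset 'N(N) -> Y \subset 'N(N) ->
   [~: X, Y] \subset 'N(N).
  by move=> X Y sX sY; apply: comm_subG.
rewrite -!(quotient_sub1 (nX _ _ (nX _ _ _ _) _)) //.
rewrite !quotientR ?nX //.
move=> /trivgP h1 /trivgP h2; apply/trivgP.
exact: (@three_subgroup _ (A / N)%G (B / N)%G (C / N)%G).
Qed.

Lemma lcn_comm (gT : finGroupType) (G : {group gT}) i j :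
  [~: 'L_i.+1(G), 'L_j.+1(G)] \subset 'L_(i + j).+2(G).
Proof.
elim: i j => [|i IH] j.
  by rewrite add0n commGC; apply: lcnSnS.
change 'L_i.+2(G) with [~: 'L_i.+1(G), G].
have -> : (i.+1 + j).+2 = (i + j).+3 by rewrite addSn.
apply: (@three_subgroupN _ G) => //; first exact: lcn_normal.
- exact: lcn_sub.
- exact: lcn_sub.
- rewrite (commGC G); change [~: [~: 'L_j.+1(G), G], 'L_i.+1(G)] with [~: 'L_j.+2(G), 'L_i.+1(G)].
  by rewrite commGC; have := IH j.+1; rewrite addnS.
- rewrite (commGC _ ('L_i.+1(G))); change 'L_(i + j).+3(G) with [~: 'L_(i+j).+2(G), G].
  by apply: commSg; apply: IH.
Qed.

Lemma amulgV (H : absGroup) (a : H) : amul a (ainv a) = aone H.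
Proof.
rewrite -[amul a _]amul1g -(amulVg (ainv a)) -amulA (amulA (ainv a)) amulVg.
by rewrite amul1g amulVg.
Qed.

Lemma amulg1 (H : absGroup) (a : H) : amul a (aone H) = a.
Proof. by rewrite -(amulVg a) amulA amulgV amul1g. Qed.

Lemma amulKl (H : absGroup) (a b c : H) : amul a b = amul a c -> b = c.
Proof.
by move=> e; rewrite -(amul1g b) -(amul1g c) -(amulVg a) -!amulA e.
Qed.

Lemma amulKr (H : absGroup) (a b c : H) : amul b a = amul c a -> b = c.
Proof.
by move=> e; rewrite -(amulg1 b) -(amulg1 c) -(amulgV a) !amulA e.
Qed.

Lemma apowD (H : absGroup) (a : H) m n :
  apow a (m + n) = amul (apow a m) (apow a n).
Proof. by elim: m => [|m IH] /=; rewrite ?amul1g // IH amulA. Qed.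

Lemma apowM (H : absGroup) (a : H) m n : apow a (m * n) = apow (apow a m) n.
Proof. by elim: n => [|n IH]; rewrite ?muln0 // mulnS apowD IH. Qed.

Lemma apow1 (H : absGroup) n : apow (aone H) n = aone H.
Proof. by elim: n => [|n IH] //=; rewrite IH amul1g. Qed.

Definition acomm (H : absGroup) (a b : H) := amul a b = amul b a.

Lemma acommX (H : absGroup) (a b : H) n : acomm a b -> acomm a (apow b n).
Proof.
rewrite /acomm => e; elim: n => [|n IH] /=; first by rewrite amulg1 amul1g.
by rewrite amulA e -amulA IH amulA.
Qed.

Lemma acommXX (H : absGroup) (a b : H) m n : acomm a b -> acomm (apow a m) (apow b n).
Proof.
move=> e; apply: acommX.
have : acomm b a by rewrite /acomm e.
by move/(acommX m).
Qed.

Lemma lconjE (gT : finGroupType) (a b : gT) : lconj a b = a * b * a^-1.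
Proof. by rewrite /lconj conjgE invgK mulgA. Qed.

Lemma lconj1 (gT : finGroupType) (b : gT) : lconj 1 b = b.
Proof. by rewrite lconjE invg1 mulg1 mul1g. Qed.

Lemma lconjM (gT : finGroupType) (u v y : gT) : lconj u (lconj v y) = lconj (u * v) y.
Proof. by rewrite !lconjE invgM !mulgA. Qed.

Lemma lconjMg (gT : finGroupType) (u v y : gT) : lconj u (v * y) = lconj u v * lconj u y.
Proof. by rewrite /lconj conjMg. Qed.

Lemma lconj_fix (gT : finGroupType) (u v : gT) : commute u v -> lconj u v = v.
Proof. by move=> c; rewrite lconjE c mulgK. Qed.

Lemma lconj_mem (gT : finGroupType) (G : {group gT}) u v :
  u \in G -> v \in G -> lconj u v \in G.
Proof. by move=> uG vG; rewrite /lconj groupJ ?groupV. Qed.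

Lemma lconjK (gT : finGroupType) (u v : gT) : lconj u (lconj u^-1 v) = v.
Proof. by rewrite lconjM mulgV lconj1. Qed.

Lemma f1g (gT : finGroupType) (G : {group gT}) (H : absGroup) (f : gT -> gT -> H) :
  tensor_pairing G f -> forall h, h \in G -> f 1 h = aone H.
Proof.
case=> R1 _ h hG.
have := R1 1 1 h (group1 G) (group1 G) hG.
rewrite mulg1 !lconj1 => e.
by apply: (@amulKr _ (f 1 h)); rewrite amul1g.
Qed.

Lemma fXl (gT : finGroupType) (G : {group gT}) (H : absGroup) (f : gT -> gT -> H) :
  tensor_pairing G f -> forall a b k, a \in G -> b \in G -> commute a b ->
  f (a ^+ k) b = apow (f a b) k.
Proof.
move=> Hf a b k aG bG cab; elim: k => [|k IH]; first by rewrite expg0 (f1g Hf).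
case: Hf => R1 _.
rewrite expgSr R1 ?groupX // lconj_fix; last exact: commute_sym (commuteX k (commute_refl a)).
by rewrite lconj_fix ?IH //; apply: commute_sym; apply: commuteX; apply: commute_sym.
Qed.

Lemma fXr (gT : finGroupType) (G : {group gT}) (H : absGroup) (f : gT -> gT -> H) :
  tensor_pairing G f -> forall a b k, a \in G -> b \in G -> commute a b ->
  f a (b ^+ k) = apow (f a b) k.
Proof.
move=> Hf a b k aG bG cab; elim: k => [|k IH].
  rewrite expg0 /=.
  case: Hf => _ R2.
  have := R2 a 1 1 aG (group1 G) (group1 G).
  rewrite mulg1 !lconj1 => e.
  by apply: (@amulKl _ (f a 1)); rewrite amulg1.
case: Hf => _ R2.
rewrite expgS R2 ?groupX // lconj_fix; last exact: commute_sym.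
by rewrite lconj_fix ?IH //; apply: commuteX (commute_refl b).
Qed.

Lemma fswap (gT : finGroupType) (G : {group gT}) (H : absGroup) (f : gT -> gT -> H) :
  tensor_pairing G f -> forall a b c d, a \in G -> b \in G -> c \in G -> d \in G ->
  amul (f (lconj (a * c) b) (lconj (a * c) d)) (f a c) =
  amul (f a c) (f (lconj (c * a) b) (lconj (c * a) d)).
Proof.
move=> Hf a b c d aG bG cG dG.
have [R1 R2] := Hf.
have e1 := R1 a b (c * d) aG bG (groupM cG dG).
have e2 := R2 (a * b) c d (groupM aG bG) cG dG.
have eA := R2 (lconj a b) (lconj a c) (lconj a d) (lconj_mem aG bG) (lconj_mem aG cG) (lconj_mem aG dG).
have eB := R2 a c d aG cG dG.
have eC := R1 a b c aG bG cG.
have eD := R1 (lconj c a) (lconj c b) (lconj c d) (lconj_mem cG aG) (lconj_mem cG bG) (lconj_mem cG dG).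
rewrite -lconjMg in eA; rewrite -lconjMg in eD.
rewrite e2 eA eB eC eD !lconjM in e1.
have h1 : lconj c a * c = c * a by rewrite lconjE mulgKV.
have h2 : lconj a c * a = a * c by rewrite lconjE mulgKV.
rewrite h1 h2 -!amulA in e1.
move/amulKl: e1.
rewrite !amulA.
by move/amulKr.
Qed.

Unset Implicit Arguments.
Set Strict Implicit.

Theorem lemma5p2 (gT : finGroupType) (G : {group gT}) (c : nat) :
  nilpotent G -> nil_class G = c -> odd (#|G|)%N ->
  let n := uphalf c in
  forall x g, x \in 'L_n(G) -> g \in G ->
    tensor_order_dvd G x g (exponent 'L_n(G)).
Proof.
move=> nilG Hc oddG n x g xL gG H f Hf.
have sLG : 'L_n(G) \subset G by apply: lcn_sub.
have xG : x \in G by apply: (subsetP sLG).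
have Lc1 : 'L_c.+1(G) = 1 by apply/(lcn_nil_classP c nilG); rewrite Hc.
have comm : forall y z, y \in 'L_n(G) -> z \in 'L_n.+1(G) -> commute y z.
  move=> y z yL zL; apply/commgP.
  have : [~ y, z] \in 'L_c.+1(G).
    have cn : c <= n.*2.
      rewrite /n uphalf_half -{1}(odd_double_half c).
      case: (odd c) => /=; rewrite ?doubleS ?double0 ?add0n ?add1n //.
    case En : n => [|m].
      have c0 : c = 0 by move: cn; rewrite En; lia.
      rewrite c0; rewrite En in yL zL; apply: groupR => //.
    rewrite En in yL zL.
    have := mem_commg yL zL => /(subsetP (lcn_comm G m m.+1)).
    apply: (subsetP (lcn_sub_leq _ _)).
    move: cn; rewrite En; lia.
  by rewrite Lc1 => /set1P ->.
set d := lconj x g * g^-1.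
have dE : d = [~ x^-1, g^-1] by rewrite /d lconjE /commg /conjg !invgK !mulgA.
have dL : d \in 'L_n.+1(G).
  rewrite dE; apply: (subsetP (lcnSnS n G)).
  by apply: mem_commg; rewrite groupV.
have dG : d \in G by rewrite /d groupM ?groupV ?lconj_mem.
set y := lconj g x.
have yL : y \in 'L_n(G).
  rewrite /y /lconj memJ_norm //.
  by apply: (subsetP (normal_norm (lcn_normal n G))); rewrite groupV.
have yG : y \in G by apply: (subsetP sLG).
have cxd : commute x d by apply: comm.
have cyd : commute y d by apply: comm.
have [R1 R2] := Hf.
set T := f x g; set u := f y d.
have S2 : forall k, lconj (x ^+ k) g = d ^+ k * g.
  elim=> [|k IH]; first by rewrite expg0 lconj1 mul1g.
  rewrite expgS -lconjM IH lconjMg lconj_fix; last exact: commuteX.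
  by rewrite expgSr -mulgA /d mulgKV.
have S1 : forall k, f x (d ^+ k * g) = amul T (apow u k).
  move=> k.
  have -> : d ^+ k * g = g * lconj g^-1 (d ^+ k) by rewrite lconjE invgK !mulgA mulgV mul1g.
  rewrite R2 ?lconj_mem ?groupV ?groupX // lconjK.
  by rewrite (fXr Hf) //.
have TU : acomm T u.
  have gxG : (g * x)^-1 \in G by rewrite groupV groupM.
  have := fswap Hf xG (lconj_mem gxG yG) gG (lconj_mem gxG dG).
  have e1 : forall z, lconj (x * g) (lconj (g * x)^-1 z) = lconj d z.
    by move=> z; rewrite lconjM; congr lconj; rewrite /d lconjE invgM !mulgA.
  rewrite !e1 !lconjK lconj_fix; last exact: commute_sym.
  rewrite lconj_fix //.
have S3 : forall k, f (x ^+ k) g = amul (apow T k) (apow u 'C(k, 2)).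
  elim=> [|k IH]; first by rewrite expg0 (f1g Hf) //= amul1g.
  rewrite expgSr R1 ?groupX // lconj_fix; last exact: commute_sym (commuteX k (commute_refl x)).
  rewrite S2 S1 IH binS bin1 apowD /=.
  have c1 : acomm (apow u k) (apow T k).
    by apply: acommXX; rewrite /acomm TU.
  have c2 : acomm (apow u k) (apow u 'C(k, 2)) by apply: acommXX.
  by rewrite -!amulA (amulA (apow u k)) c1 -amulA c2.
have eodd : odd (exponent 'L_n(G)).
  apply: (dvdn_odd (exponent_dvdn _)).
  exact: (dvdn_odd (cardSg sLG)).
have := S3 (exponent 'L_n(G)).
rewrite expg_exponent // (f1g Hf) //.
move: eodd; set e := exponent _ => eodd.
have [m em] : exists m, e = m.*2.+1.
  exists e./2; rewrite -{1}(odd_double_half e) eodd //.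
have -> : 'C(e, 2) = (e * m)%N.
  by rewrite bin2 {2}em /= -doubleMr doubleK.
rewrite apowM /u -(fXl Hf) // expg_exponent // (f1g Hf) // apow1 amulg1.
by move->.
Qed.
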